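(* (i) If $f(z)=z+a_2z^2+\dots+a_dz^d$ is univalent in the unit disk $\mathbb D$ and $a_d=1/d$, then $f'$ is self-dual in $\Pi_{d-1}$. (ii) If $f(z)=z+\frac{a_1}{z}+\dots+\frac{a_d}{z^d}$ is univalent in $\Delta=\widehat{\mathbb C}\setminus\overline{\mathbb D}$ and $a_d=-1/d$, then the polynomial $z\mapsto f'(1/z)$ is self-dual in $\Pi_{d+1}$.
   Context: $\Pi_k$ denotes the space of complex polynomials of degree $\le k$. For $p\in\Pi_k$ define $p^*(z)=z^k\,\overline{p(1/\bar z)}$; $p$ is self-dual in $\Pi_k$ if $p^*=p$. *)

(* Defs.v *)
From HB Require Import structures.
From mathcomp Require Import all_boot all_order all_algebra.
From mathcomp Require Import complex.
From mathcomp Require Import reals.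
Set Implicit Arguments. Unset Strict Implicit. Unset Printing Implicit Defensive.
Import Order.TTheory GRing.Theory Num.Theory.
Local Open Scope ring_scope.

Definition in_Pi (R : realType) (k : nat) (p : {poly R[i]}) : bool :=
  (size p <= k.+1)%N.

(* p is self-dual in Pi_k: p \in Pi_k and p^*(z) := z^k * conj(p(1/conj z)) = p(z)
   (as functions; p^* is defined for z <> 0, which determines the polynomial). *)
Definition selfdual (R : realType) (k : nat) (p : {poly R[i]}) : Prop :=
  in_Pi k p /\
  forall z : R[i], z != 0 -> z ^+ k * (p.[(z^*)^-1])^* = p.[z].

(* open unit disk D and exterior Delta (finite part) *)
Definition unit_disk (R : realType) : pred R[i] := [pred z | `|z| < 1].
Definition ext_disk (R : realType) : pred R[i] := [pred z | 1 < `|z|].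

Definition laurent_f (R : realType) (d : nat) (a : nat -> R[i]) (z : R[i]) : R[i] :=
  z + \sum_(1 <= k < d.+1) a k / z ^+ k.
Definition laurent_df (R : realType) (d : nat) (a : nat -> R[i]) (z : R[i]) : R[i] :=
  1 - \sum_(1 <= k < d.+1) (k%:R * a k) / z ^+ k.+1.

(* Main.v *)
Require Import Defs.
From HB Require Import structures.
From mathcomp Require Import all_boot all_order all_algebra.
From mathcomp Require Import complex.
From mathcomp Require Import reals.
From mathcomp Require Import ring.
Set Implicit Arguments. Unset Strict Implicit. Unset Printing Implicit Defensive.
Import Order.TTheory GRing.Theory Num.Theory.
Local Open Scope ring_scope.

Section Gen.
Variable C : numClosedFieldType.

Lemma logderiv (s : seq C) x : all (fun r => x != r) s ->
  (\prod_(r <- s) ('X - r%:P))^`().[x] =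
  (\prod_(r <- s) ('X - r%:P)).[x] * \sum_(r <- s) (x - r)^-1.
Proof.
elim: s => [|r s IH] /=; first by rewrite !big_nil mulr0 -polyC1 derivC horner0.
move=> /andP [xr /IH {}IH].
rewrite !big_cons derivM derivXsubC hornerD !hornerM IH !hornerE.
have : x - r != 0 by rewrite subr_eq0.
move: (\prod_(j <- s) ('X - j%:P)).[x] => P h.
rewrite mulrDr [(x - r) * P * _]mulrAC mulfV // mul1r; congr (_ + _).
Qed.

Lemma deriv_double (c x : C) (Q : {poly C}) :
  (c *: (('X - x%:P) * (('X - x%:P) * Q)))^`().[x] = 0.
Proof.
by rewrite derivZ !derivM derivXsubC !hornerE subrr !(mul0r, mulr0, add0r, addr0).
Qed.

Lemma exists_min (T : eqType) (s : seq T) (h : T -> C) :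
  s != [::] -> (forall x, x \in s -> h x \is Num.real) ->
  exists2 x, x \in s & forall y, y \in s -> h x <= h y.
Proof.
elim: s => [//|a s IH] _ hr.
have hra : h a \is Num.real by apply: hr; rewrite mem_head.
case: (eqVneq s [::]) => [->|sn].
  by exists a; rewrite ?mem_head // => y; rewrite inE => /eqP ->.
have [|b bs hb] := IH sn; first by move=> x xs; apply: hr; rewrite inE xs orbT.
have hrb : h b \is Num.real by apply: hr; rewrite inE bs orbT.
case/orP: (real_leVge hra hrb) => hab.
  exists a; first by rewrite mem_head.
  by move=> y; rewrite inE => /orP [/eqP ->//| /hb]; apply: le_trans.
exists b; first by rewrite inE bs orbT.
by move=> y; rewrite inE => /orP [/eqP ->//| /hb].
Qed.

Lemma exists_small (s : seq C) d0 : 0 < d0 -> (forall x, x \in s -> 0 < x) ->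
  exists2 d, 0 < d & (d <= d0) && all (fun x => d <= x) s.
Proof.
elim: s => [|a s IH] d0p hs; first by exists d0; rewrite ?lexx.
have [|d dp /andP [dd0 ds]] := IH d0p; first by move=> x xs; apply: hs; rewrite inE xs orbT.
have ap : 0 < a by apply: hs; rewrite mem_head.
case/orP: (real_leVge (gtr0_real dp) (gtr0_real ap)) => hda.
  by exists d => //=; rewrite dd0 hda ds.
exists a => //=; rewrite (le_trans hda dd0) lexx /=.
by apply/allP => x xs; apply: le_trans hda _; move/allP: ds; apply.
Qed.

Lemma prod_ge1_eq1 (s : seq C) : (forall x, x \in s -> 1 <= x) ->
  \prod_(x <- s) x = 1 -> forall x, x \in s -> x = 1.
Proof.
elim: s => [//|a s IH] hs; rewrite big_cons => h.
have a1 : 1 <= a by apply: hs; rewrite mem_head.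
have hs' : forall x, x \in s -> 1 <= x by move=> x xs; apply: hs; rewrite inE xs orbT.
have P1 : 1 <= \prod_(x <- s) x.
  elim: s hs' {IH h hs} => [|b s IH] hs'; first by rewrite big_nil.
  rewrite big_cons; apply: (le_trans (IH _)) => [x xs|]; first by apply: hs'; rewrite inE xs orbT.
  apply: ler_peMl; first by apply: le_trans ler01 (IH _) => x xs; apply: hs'; rewrite inE xs orbT.
  by apply: hs'; rewrite mem_head.
have a_1 : a = 1.
  apply/le_anti; rewrite a1 andbT -h.
  by apply: ler_peMr => //; apply: le_trans ler01 a1.
move: h; rewrite a_1 mul1r => h x; rewrite inE => /orP [/eqP ->//|].
exact: IH.
Qed.

Lemma conj_ident (s : seq C) z : z != 0 -> (forall c, c \in s -> `|c| = 1) ->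
  z ^+ size s * (\prod_(c <- s) ((z^*)^-1 - c))^* =
  \prod_(c <- s) (- c^*) * \prod_(c <- s) (z - c).
Proof.
move=> z0; elim: s => [|c s IH] hs /=; first by rewrite !big_nil expr0 rmorph1 !mul1r.
rewrite !big_cons rmorphM exprS mulrACA.
have -> : z * (z^*^-1 - c)^* = - c^* * (z - c).
  have : c^* * c = 1 by rewrite -normCKC hs ?mem_head // expr1n.
  rewrite rmorphB fmorphV /= conjCK => cc.
  rewrite mulrDr mulrN mulfV // mulrBr mulNr mulNr cc opprK.
  by rewrite [z * _]mulrC addrC.
rewrite /= IH; last by move=> x xs; apply: hs; rewrite inE xs orbT.
by rewrite mulrACA.
Qed.

Lemma selfdual_gen (P : {poly C}) k : size P = k.+1 -> lead_coef P = 1 ->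
  P.[0] = 1 -> (forall c, root P c -> 1 <= `|c|) ->
  forall z, z != 0 -> z ^+ k * (P.[(z^*)^-1])^* = P.[z].
Proof.
move=> sP lP P0 hr z z0.
have [rs Prs] := closed_field_poly_normal P.
rewrite lP scale1r in Prs.
have srs : size rs = k by move: sP; rewrite Prs size_prod_XsubC => [[]].
have rootrs : forall c, c \in rs -> root P c.
  move=> c cr; rewrite Prs /root horner_prod prodf_seq_eq0; apply/hasP.
  by exists c; rewrite //= hornerXsubC subrr.
have P0' : \prod_(c <- rs) (- c) = 1.
  by rewrite -[RHS]P0 Prs horner_prod; apply: eq_bigr => c _; rewrite hornerXsubC sub0r.
have n1 : forall c, c \in rs -> `|c| = 1.
  move=> c cr.
  have := @prod_ge1_eq1 [seq `|c| | c <- rs] _ _ `|c| (map_f _ cr); apply.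
    by move=> x /mapP [y yr ->]; apply: hr; apply: rootrs.
  rewrite big_map (eq_bigr (fun c => `|- c|)); last by move=> i _; rewrite normrN.
  by rewrite -normr_prod P0' normr1.
rewrite Prs !horner_prod -srs.
under eq_bigr do rewrite hornerXsubC.
under [in RHS]eq_bigr do rewrite hornerXsubC.
rewrite conj_ident // -[RHS]mul1r; congr (_ * _).
transitivity ((\prod_(c <- rs) (- c))^*); last by rewrite P0' conjC1.
by rewrite rmorph_prod; apply: eq_bigr => c _; rewrite rmorphN.
Qed.

Lemma prod_const_seq (T : Type) (s : seq T) (a : C) : \prod_(r <- s) a = a ^+ size s.
Proof. by elim: s => [|x s IH]; rewrite ?big_nil ?big_cons ?IH ?exprS. Qed.

Lemma sum_const_seq (T : Type) (s : seq T) (a : C) : \sum_(r <- s) a = a *+ size s.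
Proof. by elim: s => [|x s IH]; rewrite ?big_nil ?big_cons ?IH ?mulrS. Qed.

Lemma crit (A B : {poly C}) (S : pred C) z0 d0 :
  0 < d0 -> (forall z, `|z - z0| < d0 -> (z \in S) && (B.[z] != 0)) ->
  (size B < size A)%N -> (2 < size A)%N ->
  A^`() * B - A * B^`() != 0 -> (A^`() * B - A * B^`()).[z0] = 0 ->
  {in S &, injective (fun z => A.[z] / B.[z])} -> False.
Proof.
move=> d0p hS sBA sA Wn0 Wz0 inj.
set W := A^`() * B - A * B^`() in Wn0 Wz0.
have [cs Wcs] := closed_field_poly_normal W.
have hpos : forall x, x \in [seq `|c - z0| | c <- cs & c != z0] -> 0 < x.
  by move=> x /mapP [c]; rewrite mem_filter => /andP [cz _] ->; rewrite normr_gt0 subr_eq0.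
have [del delp /andP [deld0 /allP delcs]] := exists_small d0p hpos.
have Wnz : forall z, 0 < `|z - z0| -> `|z - z0| < del -> W.[z] != 0.
  move=> z zp zd; rewrite Wcs hornerZ mulf_eq0 negb_or lead_coef_eq0 Wn0 /=.
  rewrite horner_prod prodf_seq_eq0; apply/hasPn => c cr /=; rewrite hornerXsubC subr_eq0.
  case: (eqVneq c z0) => [->|cz]; first by rewrite -subr_eq0 -normr_gt0.
  apply/eqP => zc.
  have : del <= `|c - z0| by apply: delcs; apply: map_f; rewrite mem_filter cz.
  by rewrite -zc => h; have := lt_le_trans zd h; rewrite ltxx.
have B0 : B.[z0] != 0 by have := hS z0; rewrite subrr normr0 => /(_ d0p) /andP [].
set n := (size A).-1.
have n2 : (2 <= n)%N by rewrite /n; case: (size A) sA => //.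
set f0 := A.[z0] / B.[z0].
set ka := B^`().[z0] / B.[z0].
set M := `|ka| + n%:R / del.
have Mp : 0 < M.
  by apply: ltr_wpDl => //; apply: divr_gt0 => //; rewrite ltr0n; case: (n) n2.
set eta := M^-1.
have etap : 0 < eta by rewrite invr_gt0.
set L := lead_coef A.
have L0 : L != 0 by rewrite lead_coef_eq0 -size_poly_gt0; case: (size A) sA.
set eps := `|L| * eta ^+ n / (2 * `|B.[z0]|).
have epsp : 0 < eps.
  apply: divr_gt0; last by rewrite mulr_gt0 // normr_gt0.
  by rewrite mulr_gt0 ?normr_gt0 // exprn_gt0.
set c := f0 + eps.
set H := A - c *: B.
have sH : size H = size A.
  rewrite /H size_polyDl // size_polyN; apply: leq_ltn_trans sBA.
  exact: size_scale_leq.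
have lH : lead_coef H = L.
  rewrite /H lead_coefDl // size_polyN; apply: leq_ltn_trans sBA.
  exact: size_scale_leq.
have [rs Hrs] := closed_field_poly_normal H.
rewrite lH in Hrs.
have srs : size rs = n.
  by rewrite /n -sH Hrs size_scale // size_prod_XsubC.
have Hroot : forall r, r \in rs -> H.[r] = 0.
  move=> r rr; rewrite Hrs hornerZ horner_prod; apply/eqP; rewrite mulf_eq0 prodf_seq_eq0.
  by apply/orP; right; apply/hasP; exists r; rewrite //= hornerXsubC subrr.
have A0 : A.[z0] = f0 * B.[z0] by rewrite /f0 divfK.
have Hz0 : H.[z0] = - (eps * B.[z0]).
  by rewrite /H hornerD hornerN hornerZ A0 /c mulrDl opprD addrA subrr add0r.
have Hz0n : H.[z0] != 0 by rewrite Hz0 oppr_eq0 mulf_neq0 // gt_eqF.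
have rsz : all (fun r => z0 != r) rs.
  by apply/allP => r rr; apply/eqP => zr; move: Hz0n; rewrite zr Hroot ?eqxx.
have dH : H^`() = A^`() - c *: B^`() by rewrite /H derivB derivZ.
have dHz0 : H^`().[z0] = - (eps * B^`().[z0]).
  have A'0 : A^`().[z0] = f0 * B^`().[z0].
    move/eqP: Wz0; rewrite /W hornerD hornerN !hornerM subr_eq0 A0 => /eqP h.
    by apply: (mulIf B0); rewrite h mulrAC.
  by rewrite dH hornerD hornerN hornerZ A'0 /c mulrDl opprD addrA subrr add0r.
have sumk : \sum_(r <- rs) (z0 - r)^-1 = ka.
  have : H^`().[z0] = H.[z0] * \sum_(r <- rs) (z0 - r)^-1.
    by rewrite Hrs derivZ !hornerZ logderiv // mulrA.
  rewrite dHz0 Hz0 => h; apply: (mulfI Hz0n); rewrite Hz0 -h /ka.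
  by field.
have rsn : rs != [::] by apply/eqP => rs0; move: srs; rewrite rs0 /= => n0; rewrite -n0 in n2.
have hreal : forall r, r \in rs -> `|z0 - r| \is Num.real by move=> r _; apply: normr_real.
have [r1 r1s hr1] := exists_min rsn hreal.
set t1 := `|z0 - r1|.
have t1p : 0 < t1 by rewrite normr_gt0 subr_eq0; move/allP: rsz; apply.
have normH : `|H.[z0]| = `|L| * \prod_(r <- rs) `|z0 - r|.
  rewrite Hrs hornerZ normrM horner_prod normr_prod; congr (_ * _).
  by apply: eq_bigr => r _; rewrite hornerXsubC.
have t1eta : t1 < eta.
  have h1 : `|L| * t1 ^+ n <= `|L| * eta ^+ n / 2.
    have -> : `|L| * eta ^+ n / 2 = `|H.[z0]|.
      rewrite Hz0 normrN normrM (ger0_norm (ltW epsp)) /eps.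
      by field; rewrite normr_eq0.
    rewrite normH; apply: ler_wpM2l; first exact: normr_ge0.
    rewrite -srs -prod_const_seq big_seq [X in _ <= X]big_seq; apply: ler_prod => r rr; apply/andP; split; first exact: ltW.
    exact: hr1.
  rewrite real_ltNge ?gtr0_real //; apply/negP => et.
  have : `|L| * eta ^+ n <= `|L| * eta ^+ n / 2.
    apply: le_trans h1; apply: ler_wpM2l; first exact: normr_ge0.
    by apply: (lerXn2r n); rewrite ?nnegrE // ltW.
  have pos : 0 < `|L| * eta ^+ n by rewrite mulr_gt0 ?normr_gt0 ?exprn_gt0.
  rewrite ler_pdivlMr ?ltr0n // mulr_natr mulr2n gerDl => h.
  by have := lt_le_trans pos h; rewrite ltxx.
set rest := rem r1 rs.
have prs : perm_eq rs (r1 :: rest) by apply: perm_to_rem.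
have srest : size rest = n.-1 by rewrite size_rem // srs.
have restn : rest != [::] by apply/eqP => r0; move: srest; rewrite r0 /=; case: (n) n2 => [|[|m]] //.
have hreal' : forall r, r \in rest -> `|z0 - r| \is Num.real by move=> r _; apply: normr_real.
have [r2 r2s hr2] := exists_min restn hreal'.
have r2rs : r2 \in rs by apply: (mem_rem r2s).
set t2 := `|z0 - r2|.
have t2p : 0 < t2 by rewrite normr_gt0 subr_eq0; move/allP: rsz; apply.
have t2del : t2 < del.
  have e1 : (z0 - r1)^-1 = ka - \sum_(r <- rest) (z0 - r)^-1.
    by rewrite -sumk (perm_big _ prs) big_cons addrK.
  have e2 : t1^-1 <= `|ka| + (n.-1)%:R * t2^-1.
    rewrite /t1 -normfV e1; apply: le_trans (ler_normB _ _) _; apply: lerD => //.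
    apply: le_trans (ler_norm_sum _ _ _) _.
    rewrite -srest mulr_natl -(sum_const_seq rest) big_seq [X in _ <= X]big_seq; apply: ler_sum => r rr.
    have zr : z0 != r by move/allP: rsz; apply; apply: (mem_rem rr).
    have zr2 : z0 != r2 by move/allP: rsz; apply.
    by rewrite normfV lef_pV2 ?posrE ?normr_gt0 ?subr_eq0 //; exact: hr2.
  have e3 : M < t1^-1.
    by rewrite /eta in t1eta; rewrite -[M]invrK ltf_pV2 ?posrE ?invr_gt0.
  rewrite real_ltNge ?gtr0_real //; apply/negP => dt.
  have : (n.-1)%:R * t2^-1 <= n%:R / del.
    apply: ler_pM; rewrite ?ler0n ?invr_ge0 => //; first exact: ltW.
      by rewrite ler_nat leq_pred.
    by rewrite lef_pV2 ?posrE.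
  move=> h; have := lt_le_trans e3 (le_trans e2 (lerD (lexx _) h)); rewrite ltxx.
  by [].
have t1t2 : t1 <= t2 by apply: hr1.
have t1del : t1 < del by apply: le_lt_trans t2del.
have inS : forall r, `|z0 - r| < del -> (r \in S) && (B.[r] != 0).
  by move=> r h; apply: hS; rewrite distrC; apply: lt_le_trans deld0.
have valr : forall r, r \in rs -> `|z0 - r| < del -> A.[r] / B.[r] = c.
  move=> r rr h; have /andP [_ Br] := inS r h.
  have := Hroot r rr; rewrite /H hornerD hornerN hornerZ => /eqP; rewrite subr_eq0 => /eqP ->.
  by rewrite mulfK.
have r12 : r1 = r2.
  apply: inj; [by case/andP: (inS r1 t1del) | by case/andP: (inS r2 t2del) |].
  by rewrite /= !valr.
rewrite -r12 in r2s.
have prest : perm_eq rest (r1 :: rem r1 rest) by apply: perm_to_rem.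
have dH0 : H^`().[r1] = 0.
  by rewrite Hrs (perm_big _ prs) big_cons (perm_big _ prest) big_cons deriv_double.
have : W.[r1] != 0 by apply: Wnz; rewrite distrC.
have -> : W = H^`() * B - H * B^`().
  rewrite /W dH /H !mulrBl -!scalerAl [B^`() * B]mulrC.
  by rewrite opprB addrA subrK.
by rewrite hornerD hornerN !hornerM dH0 Hroot // mul0r mul0r subrr eqxx.
Qed.

Lemma powpred (w : C) n : w != 0 -> w ^+ n.-1 *+ n = n%:R * w ^+ n / w.
Proof.
move=> w0; case: n => [|m]; first by rewrite mulr0n mul0r mul0r.
by rewrite /= exprS [w * _]mulrC mulrA mulfK // mulr_natl.
Qed.

Definition Apoly (d : nat) (a : nat -> C) : {poly C} :=
  'X^(d.+1) + \sum_(1 <= k < d.+1) a k *: 'X^(d - k).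

Lemma Apoly_size d a : size (Apoly d a) = d.+2.
Proof.
have sS : (size (\sum_(1 <= k < d.+1) a k *: ('X^(d - k) : {poly C}))%R <= d.+1)%N.
  apply/leq_sizeP => j hj; rewrite coef_sum big1_seq // => k _.
  rewrite coefZ coefXn gtn_eqF ?mulr0 //; apply: leq_ltn_trans hj.
  exact: leq_subr.
by rewrite /Apoly size_polyDl size_polyXn // ltnS.
Qed.

Lemma Apoly_eval d a w : w != 0 ->
  (Apoly d a).[w] = w ^+ d.+1 + w ^+ d * \sum_(1 <= k < d.+1) a k / w ^+ k.
Proof.
move=> w0; rewrite /Apoly hornerD hornerXn horner_sum mulr_sumr; congr (_ + _).
apply: eq_big_nat => k /andP [_ kd]; rewrite hornerZ hornerXn.
have -> : w ^+ d = w ^+ (d - k) * w ^+ k by rewrite -exprD subnK.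
by field; rewrite expf_neq0.
Qed.

Lemma Apoly_f d a w : w != 0 ->
  (Apoly d a).[w] / ('X^d).[w] = w + \sum_(1 <= k < d.+1) a k / w ^+ k.
Proof.
move=> w0; rewrite Apoly_eval // hornerXn exprS mulrDl mulfK ?expf_neq0 //.
by rewrite mulrC mulKf ?expf_neq0.
Qed.

Lemma Apoly_W d a w : w != 0 ->
  ((Apoly d a)^`() * 'X^d - Apoly d a * ('X^d)^`()).[w] =
  (w ^+ d) ^+ 2 * (1 - \sum_(1 <= k < d.+1) (k%:R * a k) / w ^+ k.+1).
Proof.
move=> w0.
set S2 := \sum_(1 <= k < d.+1) a k / w ^+ k.
set S3 := \sum_(1 <= k < d.+1) k%:R * a k / w ^+ k.
have dA : (Apoly d a)^`().[w] = ((d.+1)%:R * w ^+ d.+1 + w ^+ d * (d%:R * S2 - S3)) / w.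
  rewrite /Apoly derivD derivXn raddf_sum hornerD hornerMn hornerXn powpred //.
  rewrite horner_sum mulrDl; congr (_ + _).
  rewrite /S2 /S3 mulr_sumr -sumrB mulr_sumr mulr_suml.
  apply: eq_big_nat => k /andP [_ kd].
  rewrite /= derivZ hornerZ derivXn hornerMn hornerXn powpred //.
  have -> : w ^+ d = w ^+ (d - k) * w ^+ k by rewrite -exprD subnK.
  by rewrite natrB //; field; rewrite w0 expf_neq0.
have S3' : \sum_(1 <= k < d.+1) (k%:R * a k) / w ^+ k.+1 = S3 / w.
  rewrite /S3 mulr_suml; apply: eq_big_nat => i _; rewrite exprSr invfM mulrA //.
rewrite hornerD hornerN !hornerM dA Apoly_eval // derivXn hornerMn !hornerXn powpred // S3'.
rewrite -/S2 exprS -natr1; move: (w ^+ d) => x; field.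
by [].
Qed.

Definition Qpoly (d : nat) (a : nat -> C) : {poly C} :=
  1 - \sum_(1 <= k < d.+1) (k%:R * a k) *: 'X^(k.+1).

Lemma Qpoly_eval d a z : z != 0 ->
  (Qpoly d a).[z] = 1 - \sum_(1 <= k < d.+1) (k%:R * a k) / (z^-1) ^+ k.+1.
Proof.
move=> z0; rewrite /Qpoly hornerD hornerN hornerC horner_sum; congr (_ - _).
by apply: eq_big_nat => k _; rewrite hornerZ hornerXn exprVn invrK.
Qed.

Lemma Qpoly_coef d a j : (Qpoly d a)`_j =
  (j == 0)%:R - \sum_(1 <= k < d.+1) (k%:R * a k) * (j == k.+1)%:R.
Proof.
rewrite /Qpoly coefB coef1 coef_sum; congr (_ - _).
by apply: eq_bigr => k _; rewrite coefZ coefXn.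
Qed.

Lemma poly_eq_nz (p q : {poly C}) : (forall z, z != 0 -> p.[z] = q.[z]) -> p = q.
Proof.
move=> h; apply/eqP; rewrite -subr_eq0; apply/negP => /negP nz.
pose s := [seq (i.+1)%:R : C | i <- iota 0 (size (p - q))].
have h1 : all (root (p - q)) s.
  apply/allP => x /mapP [i _ ->]; rewrite /root hornerD hornerN h ?subrr //.
  by rewrite pnatr_eq0.
have h2 : uniq s.
  by rewrite map_inj_uniq ?iota_uniq // => i j /eqP; rewrite eqr_nat eqSS => /eqP.
by have := max_poly_roots nz h1 h2; rewrite size_map size_iota ltnn.
Qed.

End Gen.

Unset Implicit Arguments.

Theorem lemma2p9 (R : realType) :
  (* (i) *)
  (forall (d : nat) (f : {poly R[i]}),
      (1 <= d)%N ->
      (size f <= d.+1)%N -> f`_0 = 0 -> f`_1 = 1 ->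
      f`_d = (d%:R)^-1 ->
      {in @unit_disk R &, injective (horner f)} ->
      selfdual d.-1 f^`())
  /\
  (* (ii) *)
  (forall (d : nat) (a : nat -> R[i]),
      (1 <= d)%N ->
      a d = - (d%:R)^-1 ->
      {in @ext_disk R &, injective (laurent_f d a)} ->
      forall P : {poly R[i]},
        (forall z : R[i], z != 0 -> P.[z] = laurent_df d a z^-1) ->
        selfdual d.+1 P).
Proof.
split.
- move=> d f d1 sf f0 f1 fd inj.
  have fn0 : f != 0.
    by apply/eqP => f0'; move: f1; rewrite f0' coef0 => /eqP; rewrite eq_sym oner_eq0.
  have sf' : (size f^`() <= d)%N.
    by rewrite -ltnS; apply: leq_trans (lt_size_deriv fn0) sf.
  have dn0 : (d%:R : R[i]) != 0 by rewrite pnatr_eq0 -lt0n.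
  have cd : f^`()`_d.-1 = 1 by rewrite coef_deriv prednK // fd -mulr_natr; field.
  have sz : size f^`() = d.
    apply/eqP; rewrite eqn_leq sf' /= -(prednK d1) ltnNge; apply/negP => h.
    by move: cd; rewrite nth_default // => /eqP; rewrite eq_sym oner_eq0.
  split; first by rewrite /in_Pi prednK.
  apply: (selfdual_gen (k := d.-1)).
  + by rewrite sz prednK.
  + by rewrite lead_coefE sz.
  + by rewrite horner_coef0 coef_deriv f1.
  + move=> c rc.
    rewrite real_leNgt ?real1 ?normr_real //; apply/negP => c1.
    have d2 : (2 <= d)%N.
      rewrite leqNgt; apply/negP => hd.
      have s1 : (size f^`() <= 1)%N by rewrite sz.
      by move: rc; rewrite /root (size1_polyC s1) hornerC coef_deriv f1 oner_eq0.
    have e1 : (1 : {poly R[i]})^`() = 0 by rewrite -polyC1 derivC.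
    have W1 : f^`() * 1 - f * (1 : {poly R[i]})^`() = f^`() by rewrite e1 mulr0 subr0 mulr1.
    apply: (@crit R[i] f (1 : {poly R[i]}) (@unit_disk R) c (1 - `|c|)).
    * by rewrite subr_gt0.
    * move=> z hz; rewrite hornerC oner_neq0 andbT inE /=.
      have -> : z = (z - c) + c by rewrite subrK.
      apply: le_lt_trans (ler_normD _ _) _.
      by rewrite -ltrBrDr.
    * rewrite size_poly1; apply: leq_trans (lt_size_deriv fn0); rewrite sz.
      by case: d d1 d2 {sf fd inj dn0 cd sz sf'}.
    * by have := lt_size_deriv fn0; rewrite sz; apply: leq_trans.
    * by rewrite W1 -size_poly_gt0 sz.
    * by rewrite W1; apply/eqP.
    * by move=> x y xS yS /=; rewrite !hornerC !divr1; apply: inj.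
- move=> d a d1 ad inj P hP.
  have PQ : P = Qpoly d a.
    by apply: poly_eq_nz => z z0; rewrite hP // Qpoly_eval.
  have cQ : forall j, (d.+2 <= j)%N -> (Qpoly d a)`_j = 0.
    move=> j hj; rewrite Qpoly_coef; have -> : (j == 0) = false by case: j hj.
    rewrite big1_seq ?subr0 // => k /andP [_]; rewrite mem_index_iota => /andP [_ kd].
    by rewrite gtn_eqF ?mulr0 //; apply: leq_trans hj.
  have dn0 : (d%:R : R[i]) != 0 by rewrite pnatr_eq0 -lt0n.
  have cd1 : (Qpoly d a)`_d.+1 = 1.
    rewrite Qpoly_coef big_nat_recr //= big1_seq ?add0r; last first.
      move=> k /andP [_]; rewrite mem_index_iota => /andP [_ kd].
      by rewrite eqSS gtn_eqF ?mulr0.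
    by rewrite eqxx mulr1 ad mulrN opprK divff.
  have sQ : size (Qpoly d a) = d.+2.
    apply/eqP; rewrite eqn_leq; apply/andP; split; first by apply/leq_sizeP.
    rewrite ltnNge; apply/negP => /leq_sizeP /(_ d.+1 (leqnn _)).
    by rewrite cd1 => /eqP; rewrite oner_eq0.
  have Q0 : (Qpoly d a).[0] = 1.
    rewrite horner_coef0 Qpoly_coef big1_seq ?subr0 // => k _.
    by rewrite mulr0.
  split; first by rewrite /in_Pi PQ sQ.
  rewrite PQ; apply: (selfdual_gen (k := d.+1)).
  + exact: sQ.
  + by rewrite lead_coefE sQ.
  + exact: Q0.
  + move=> c rc.
    rewrite real_leNgt ?real1 ?normr_real //; apply/negP => c1.
    have c0 : c != 0 by apply/eqP => c0; move: rc; rewrite c0 /root Q0 oner_eq0.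
    set w0 := c^-1.
    have w00 : w0 != 0 by rewrite invr_eq0.
    have w01 : 1 < `|w0| by rewrite normfV invf_gt1 // normr_gt0.
    have brk : forall w, w != 0 ->
        1 - \sum_(1 <= k < d.+1) (k%:R * a k) / w ^+ k.+1 = (Qpoly d a).[w^-1].
      move=> w w0'; have wi : w^-1 != 0 by rewrite invr_eq0.
      by rewrite (Qpoly_eval d a wi) invrK.
    apply: (@crit R[i] (Apoly d a) 'X^d (@ext_disk R) w0 (`|w0| - 1)).
    * by rewrite subr_gt0.
    * move=> z hz.
      have z1 : 1 < `|z|.
        have h1 : `|w0| <= `|z - w0| + `|z|.
          by rewrite distrC -{1}(subrK z w0); apply: ler_normD.
        move: hz; rewrite ltrBrDl => h2.
        have := lt_le_trans h2 h1; rewrite addrC ltrD2l.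
        by [].
      have z0 : z != 0 by rewrite -normr_gt0; apply: lt_trans z1.
      by rewrite inE /= z1 hornerXn expf_neq0.
    * by rewrite size_polyXn Apoly_size.
    * by rewrite Apoly_size; case: d d1 {ad inj hP PQ cQ dn0 cd1 sQ Q0 rc brk}.
    * apply/eqP => W0.
      have Qz : forall z, z != 0 -> (Qpoly d a).[z] = 0.[z].
        move=> z z0; rewrite horner0; apply/eqP.
        have := Apoly_W d a (invr_neq0 z0); rewrite W0 horner0 brk ?invr_neq0 // invrK.
        move/esym/eqP; rewrite mulf_eq0 => /orP [|//].
        by rewrite !expf_eq0 invr_eq0 (negbTE z0) !andbF.
      by move: sQ; rewrite (poly_eq_nz Qz) size_poly0.
    * by rewrite Apoly_W // brk // /w0 invrK (eqP rc) mulr0.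
    * move=> x y xS yS /=.
      have x0 : x != 0 by rewrite -normr_gt0; apply: lt_trans xS.
      have y0 : y != 0 by rewrite -normr_gt0; apply: lt_trans yS.
      rewrite !Apoly_f // => h; apply: inj => //.
Qed.
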